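(* Let $U_\alpha=gE_\alpha g^{-1}$ ($1\le\alpha\le r$) with $g\in G_{<0}$ and $W_\beta=XE_\beta z^{-1}X^{-1}$ ($1\le\beta\le r$) with $X\in G_{\geqslant0}$. Set $B_{m\alpha}:=\pi_{\geqslant0}(U_\alpha z^m)$ ($m\ge0$) and $C_{m\beta}:=\pi_{<0}(W_\beta z^{m+1})$ ($m<0$), and assume that for all $\alpha_1,\alpha_2,\beta_1,\beta_2$: $\partial_{m_1\beta_1}(B_{m_2\alpha_2})-\partial_{m_2\alpha_2}(C_{m_1\beta_1})-[C_{m_1\beta_1},B_{m_2\alpha_2}]=0$ for $m_1<0\le m_2$; $\partial_{m_1\alpha_1}(B_{m_2\alpha_2})-\partial_{m_2\alpha_2}(B_{m_1\alpha_1})-[B_{m_1\alpha_1},B_{m_2\alpha_2}]=0$ for $m_1,m_2\ge0$; $\partial_{m_1\beta_1}(C_{m_2\beta_2})-\partial_{m_2\beta_2}(C_{m_1\beta_1})-[C_{m_1\beta_1},C_{m_2\beta_2}]=0$ for $m_1,m_2<0$. Then $(\{U_\alpha\},\{W_\beta\})$ is a solution of the combined $(\mathrm{sl}_n(\mathbb{C}),\mathfrak{t})$-hierarchy.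
   Context: $R$ is a commutative $\mathbb{C}$-algebra with commuting $\mathbb{C}$-linear derivations $\partial_{m\alpha}$, $m\in\mathbb{Z}$, $1\le\alpha\le r$, acting coefficientwise on matrices and on series. $\mathrm{gl}_n(R)[z,z^{-1})$ consists of formal series $\sum_{i=-\infty}^{N}X_iz^i$ and $\mathrm{gl}_n(R)[z^{-1},z)$ of formal series $\sum_{i=-N}^{\infty}X_iz^i$ ($X_i\in\mathrm{gl}_n(R)$), with bracket $[X,Y]=\sum[X_i,Y_j]z^{i+j}$. $\pi_{\geqslant0}$ (resp. $\pi_{<0}$) keeps the terms with $i\ge0$ (resp. $i<0$). $\mathfrak{t}\subset\mathrm{sl}_n(\mathbb{C})$ is commutative of maximal dimension $r$, basis $E_1,\dots,E_r$. $G_{<0}=\{\mathrm{Id}+\sum_{i\ge1}Y_iz^{-i}\mid Y_i\in\mathrm{gl}_n(R)\}$; $G_{\geqslant0}=\{X_0+\sum_{i\ge1}X_iz^i\mid X_i\in\mathrm{gl}_n(R),\ X_0\text{ invertible}\}$. $(\{U_\alpha\},\{W_\beta\})$ is a solution of the combined $(\mathrm{sl}_n(\mathbb{C}),\mathfrak{t})$-hierarchy if: for all $m\ge0$ and all $\alpha_1,\alpha_2,\beta$: $\partial_{m\alpha_1}(U_{\alpha_2})=[\pi_{\geqslant0}(U_{\alpha_1}z^m),U_{\alpha_2}]$ and $\partial_{m\alpha_1}(W_\beta)=[\pi_{\geqslant0}(U_{\alpha_1}z^m),W_\beta]$; and for all $m<0$ and all $\beta_1,\beta_2,\alpha$: $\partial_{m\beta_1}(W_{\beta_2})=[\pi_{<0}(W_{\beta_1}z^{m+1}),W_{\beta_2}]$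 and $\partial_{m\beta_1}(U_\alpha)=[\pi_{<0}(W_{\beta_1}z^{m+1}),U_\alpha]$. *)

(* Defs.v *)
From HB Require Import structures.
From mathcomp Require Import all_boot all_order all_algebra.
Set Implicit Arguments. Unset Strict Implicit. Unset Printing Implicit Defensive.
Import Order.TTheory GRing.Theory Num.Theory.
Local Open Scope ring_scope.

(* The Lie algebra t : a commutative subspace of sl_n(C), given by a basis   *)
(* E_1..E_r, whose dimension r is maximal among commutative subspaces.       *)
Section Cartan.
Variables (C : fieldType) (n : nat).

Definition comm_sl_family (k : nat) (F : 'I_k -> 'M[C]_n) : Prop :=
  [/\ forall i, \tr (F i) = 0,
      forall i j, F i *m F j = F j *m F i
    & row_free (\matrix_(i < k) mxvec (F i))].

Definition max_comm_basis (r : nat) (E : 'I_r -> 'M[C]_n) : Prop :=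
  comm_sl_family E /\
  forall (k : nat) (F : 'I_k -> 'M[C]_n), comm_sl_family F -> (k <= r)%N.

End Cartan.

Definition is_Cderivation (C : fieldType) (R : comAlgType C) (d : R -> R) : Prop :=
  [/\ forall x y : R, d (x + y) = d x + d y,
      forall (c : C) (x : R), d (c *: x) = c *: d x
    & forall x y : R, d (x * y) = d x * y + x * d y].

(*  useries : gl_n(R)[z,z^-1)  --  USer N c  represents  sum_j c_j z^(N-j)   *)
(*  lseries : gl_n(R)[z^-1,z)  --  LSer N c  represents  sum_j c_j z^(N+j)   *)
Section Series.
Variables (R : comNzRingType) (n : nat).
Local Notation M := 'M[R]_n.

Record useries := USer { uN : int; uc : nat -> M }.
Record lseries := LSer { lN : int; lc : nat -> M }.

Definition ucoef (s : useries) (k : int) : M :=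
  if k <= uN s then uc s `|uN s - k|%N else 0.
Definition lcoef (s : lseries) (k : int) : M :=
  if lN s <= k then lc s `|k - lN s|%N else 0.

Definition ueqs (s t : useries) : Prop := forall k, ucoef s k = ucoef t k.
Definition leqs (s t : lseries) : Prop := forall k, lcoef s k = lcoef t k.

Definition uconst (A : M) : useries := USer 0 (fun j => if j == 0%N then A else 0).
Definition lconst (A : M) : lseries := LSer 0 (fun j => if j == 0%N then A else 0).
Definition lzinv (A : M) : lseries := LSer (-1) (fun j => if j == 0%N then A else 0).

Definition uone : useries := uconst 1%:M.
Definition lone : lseries := lconst 1%:M.

Definition umul (s t : useries) : useries :=
  USer (uN s + uN t) (fun j => \sum_(i < j.+1) uc s i *m uc t (j - i)%N).
Definition lmul (s t : lseries) : lseries :=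
  LSer (lN s + lN t) (fun j => \sum_(i < j.+1) lc s i *m lc t (j - i)%N).

Definition ubr (s t : useries) : useries :=
  USer (uN s + uN t)
    (fun j => \sum_(i < j.+1) (uc s i *m uc t (j - i)%N - uc t i *m uc s (j - i)%N)).
Definition lbr (s t : lseries) : lseries :=
  LSer (lN s + lN t)
    (fun j => \sum_(i < j.+1) (lc s i *m lc t (j - i)%N - lc t i *m lc s (j - i)%N)).

Definition ushift (s : useries) (m : int) : useries := USer (uN s + m) (uc s).
Definition lshift (s : lseries) (m : int) : lseries := LSer (lN s + m) (lc s).

(* pi_{>=0} of an element of gl_n(R)[z,z^-1) (a polynomial in z), viewed in
   gl_n(R)[z,z^-1) (upos) and in gl_n(R)[z^-1,z) (upos_l) *)
Definition upos (s : useries) : useries :=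
  USer (uN s) (fun j => if 0 <= uN s - j%:Z then uc s j else 0).
Definition upos_l (s : useries) : lseries := LSer 0 (fun j => ucoef s j%:Z).

(* pi_{<0} of an element of gl_n(R)[z^-1,z) (a polynomial in z^-1), viewed in
   gl_n(R)[z^-1,z) (lneg) and in gl_n(R)[z,z^-1) (lneg_u) *)
Definition lneg (s : lseries) : lseries :=
  LSer (lN s) (fun j => if lN s + j%:Z < 0 then lc s j else 0).
Definition lneg_u (s : lseries) : useries := USer (-1) (fun j => lcoef s (-1 - j%:Z)).

Definition uder (d : R -> R) (s : useries) : useries :=
  USer (uN s) (fun j => map_mx d (uc s j)).
Definition lder (d : R -> R) (s : lseries) : lseries :=
  LSer (lN s) (fun j => map_mx d (lc s j)).

Definition in_Gneg (g : useries) : Prop :=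
  (forall k : int, 0 < k -> ucoef g k = 0) /\ ucoef g 0 = 1%:M.
Definition in_Gpos (X : lseries) : Prop :=
  (forall k : int, k < 0 -> lcoef X k = 0) /\
  exists Y : M, lcoef X 0 *m Y = 1%:M /\ Y *m lcoef X 0 = 1%:M.

Variable r : nat.

Definition Bser (U : 'I_r -> useries) (m : int) (a : 'I_r) : useries :=
  upos (ushift (U a) m).
Definition Bser_l (U : 'I_r -> useries) (m : int) (a : 'I_r) : lseries :=
  upos_l (ushift (U a) m).
Definition Cser (W : 'I_r -> lseries) (m : int) (b : 'I_r) : lseries :=
  lneg (lshift (W b) (m + 1)).
Definition Cser_u (W : 'I_r -> lseries) (m : int) (b : 'I_r) : useries :=
  lneg_u (lshift (W b) (m + 1)).

Definition combined_solution (D : int -> 'I_r -> R -> R)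
    (U : 'I_r -> useries) (W : 'I_r -> lseries) : Prop :=
  [/\ forall (m : nat) (a1 a2 : 'I_r),
        ueqs (uder (D m%:Z a1) (U a2)) (ubr (Bser U m%:Z a1) (U a2)),
      forall (m : nat) (a1 b : 'I_r),
        leqs (lder (D m%:Z a1) (W b)) (lbr (Bser_l U m%:Z a1) (W b)),
      forall (m : int), m < 0 -> forall b1 b2 : 'I_r,
        leqs (lder (D m b1) (W b2)) (lbr (Cser W m b1) (W b2))
    & forall (m : int), m < 0 -> forall (b1 a : 'I_r),
        ueqs (uder (D m b1) (U a)) (ubr (Cser_u W m b1) (U a))].

End Series.

Definition emb (C : fieldType) (R : comAlgType C) (n : nat) (A : 'M[C]_n) : 'M[R]_n :=
  map_mx (fun c => c%:A) A.

Definition Ufam (C : fieldType) (R : comAlgType C) (n r : nat)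
    (E : 'I_r -> 'M[C]_n) (g ginv : useries R n) (a : 'I_r) : useries R n :=
  umul (umul g (uconst (emb R (E a)))) ginv.
Definition Wfam (C : fieldType) (R : comAlgType C) (n r : nat)
    (E : 'I_r -> 'M[C]_n) (X Xinv : lseries R n) (b : 'I_r) : lseries R n :=
  lmul (lmul X (lzinv (emb R (E b)))) Xinv.

(* Main.v *)
Require Import Defs.
From HB Require Import structures.
From mathcomp Require Import all_boot all_order all_algebra.
From mathcomp Require Import zify.
From Stdlib Require Import ClassicalEpsilon FunctionalExtensionality.
Import Order.TTheory GRing.Theory Num.Theory.
Local Open Scope ring_scope.
Set Implicit Arguments. Unset Strict Implicit. Unset Printing Implicit Defensive.

Section TS.
Variable V : zmodType.

Definition covers (F : int -> V) (S : seq int) :=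
  uniq S /\ forall p, F p != 0 -> p \in S.
Definition finsupp (F : int -> V) := exists S, covers F S.

Definition tsum (F : int -> V) : V :=
  \sum_(p <- epsilon (inhabits [::]) (covers F)) F p.

Lemma big_supp (F : int -> V) S1 S2 : covers F S1 -> covers F S2 ->
  \sum_(p <- S1) F p = \sum_(p <- S2) F p.
Proof.
move=> [u1 c1] [u2 c2].
have H : forall A B : seq int, uniq A -> (forall p, F p != 0 -> p \in B) ->
   \sum_(p <- A) F p = \sum_(p <- [seq x <- A | x \in B]) F p.
  move=> A B uA cB; rewrite big_filter [LHS](bigID (fun p => p \in B)) /=.
  rewrite [X in _ + X]big1 ?addr0 // => p /negbTE pB.
  by apply/eqP; apply: contraFT pB => /cB.
rewrite (H S1 S2) // (H S2 S1) //; apply: perm_big.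
apply: uniq_perm; rewrite ?filter_uniq // => x.
by rewrite !mem_filter andbC.
Qed.

Lemma tsumE F S : covers F S -> tsum F = \sum_(p <- S) F p.
Proof.
move=> cS; rewrite /tsum; apply: big_supp => //.
by apply: epsilon_spec; exists S.
Qed.

Lemma tsum_ext F G : (forall p, F p = G p) -> tsum F = tsum G.
Proof. by move=> e; rewrite (functional_extensionality _ _ e). Qed.

Lemma tsum0 F : (forall p, F p = 0) -> tsum F = 0.
Proof.
move=> e; rewrite (@tsumE F [::]) ?big_nil //; split => // p.
by rewrite e eqxx.
Qed.

Lemma tsum_reindex F (h hinv : int -> int) : cancel h hinv -> cancel hinv h ->
  finsupp F -> tsum F = tsum (fun q => F (h q)).
Proof.
move=> hK hiK [S [uS cS]].
have cov : covers (fun q => F (h q)) (map hinv S).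
  split; first by rewrite map_inj_uniq //; apply: can_inj hiK.
  by move=> q /cS hq; rewrite -(hK q) map_f.
rewrite (tsumE (conj uS cS)) (tsumE cov) big_map.
by apply: eq_bigr => p _; rewrite hiK.
Qed.

Lemma tsum_shift F (c : int) : finsupp F -> tsum F = tsum (fun q => F (q + c)).
Proof.
apply: tsum_reindex => x; [exact: addrK | exact: subrK].
Qed.

Lemma tsum_opp F : finsupp F -> tsum F = tsum (fun q => F (- q)).
Proof. by apply: (@tsum_reindex F (fun q => - q) (fun q => - q)) => x; rewrite opprK. Qed.

Definition itvd (hi : int) (L : nat) : seq int := [seq hi - i%:Z | i <- iota 0 L].

Lemma itvd_uniq hi L : uniq (itvd hi L).
Proof.
rewrite map_inj_uniq ?iota_uniq // => i j /eqP.
by rewrite (can2_eq (subKr hi) (subKr hi)) subKr => /eqP [].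
Qed.

Lemma mem_itvd hi L p : (p \in itvd hi L) = (hi - L%:Z < p <= hi).
Proof.
apply/mapP/idP.
  by case=> i; rewrite mem_iota => /andP [_ hi1] ->; lia.
move=> H; exists (absz (hi - p)); first by rewrite mem_iota; lia.
lia.
Qed.

Lemma finsupp_bounds F (lo hi : int) :
  (forall p, F p != 0 -> lo <= p <= hi) -> finsupp F.
Proof.
move=> b; exists (itvd hi (absz (hi - lo)).+1); split; first exact: itvd_uniq.
by move=> p /b h; rewrite mem_itvd; lia.
Qed.

Lemma tsum_exchange (W : int -> int -> V) S1 S2 : uniq S1 -> uniq S2 ->
  (forall p q, W p q != 0 -> (p \in S1) && (q \in S2)) ->
  tsum (fun p => tsum (fun q => W p q)) = tsum (fun q => tsum (fun p => W p q)).
Proof.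
move=> u1 u2 c.
have e1 : forall p, tsum (fun q => W p q) = \sum_(q <- S2) W p q.
  move=> p; apply: tsumE; split => // q /c /andP[].
  done.
have e2 : forall q, tsum (fun p => W p q) = \sum_(p <- S1) W p q.
  move=> q; apply: tsumE; split => // p /c /andP[].
  done.
rewrite (tsum_ext e1) (tsum_ext e2).
rewrite (@tsumE _ S1); last first.
  split => // p; apply: contraR => pS; rewrite big1 // => q _.
  by apply/eqP; apply: contraNT pS => /c /andP[].
rewrite (@tsumE _ S2); last first.
  split => // q; apply: contraR => qS; rewrite big1 // => p _.
  by apply/eqP; apply: contraNT qS => /c /andP[].
exact: exchange_big.
Qed.

End TS.

Section Ser.
Variables (R : comNzRingType) (n : nat).
Local Notation M := 'M[R]_n.
Local Notation useries := (useries R n).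
Local Notation lseries := (lseries R n).

Lemma mulmx_neq0 (A B : M) : A *m B != 0 -> A != 0 /\ B != 0.
Proof.
move=> h; split; apply: contraNneq h => ->; by rewrite ?mul0mx ?mulmx0.
Qed.

Lemma ucoef_gt (s : useries) k : uN s < k -> ucoef s k = 0.
Proof. by rewrite /ucoef => h; rewrite ifF //; apply/negbTE; rewrite -ltNge. Qed.

Lemma ucoef_le (s : useries) k : ucoef s k != 0 -> k <= uN s.
Proof. by apply: contraR; rewrite -ltNge => /ucoef_gt ->. Qed.

Lemma fin_umul (s t : useries) k : finsupp (fun p => ucoef s p *m ucoef t (k - p)).
Proof.
apply: (@finsupp_bounds _ _ (k - uN t) (uN s)) => p /mulmx_neq0 [/ucoef_le h1 /ucoef_le h2].
lia.
Qed.

Lemma umul_tsum (s t : useries) k :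
  ucoef (umul s t) k = tsum (fun p => ucoef s p *m ucoef t (k - p)).
Proof.
rewrite {1}/ucoef /=; case: ifP => hk.
  move Ej: (absz _) => j.
  rewrite (@tsumE _ _ (itvd (uN s) j.+1)); last first.
    split; first exact: itvd_uniq.
    move=> p /mulmx_neq0 [/ucoef_le h1 /ucoef_le h2]; rewrite mem_itvd; lia.
  rewrite /itvd big_map.
  transitivity (\sum_(0 <= i < j.+1) uc s i *m uc t (j - i)); first by rewrite big_mkord.
  change (iota 0 j.+1) with (index_iota 0 j.+1).
  apply: eq_big_nat => i /andP [_ hi].
  congr (_ *m _).
    rewrite /ucoef ifT; last by lia.
    by rewrite subKr.
  rewrite /ucoef ifT; last by lia.
  congr (uc t _); lia.
symmetry; apply: tsum0 => p.
case: (boolP (ucoef s p *m ucoef t (k - p) == 0)) => [/eqP //|].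
move=> /mulmx_neq0 [/ucoef_le h1 /ucoef_le h2]; move/negbT: hk; lia.
Qed.

Lemma ubrE (s t : useries) k :
  ucoef (ubr s t) k = ucoef (umul s t) k - ucoef (umul t s) k.
Proof.
rewrite /ucoef /= [uN t + uN s]addrC; case: ifP => _; last by rewrite subr0.
by rewrite sumrB.
Qed.

Lemma ucoef_uconst (A : M) k : ucoef (uconst A) k = if k == 0 then A else 0.
Proof.
rewrite /ucoef /=; case: (ltgtP k 0) => hk.
- by rewrite ifF //; apply/negbTE; lia.
- by [].
- by rewrite hk.
Qed.

Lemma umul_const_r (s : useries) (A : M) k : ucoef (umul s (uconst A)) k = ucoef s k *m A.
Proof.
rewrite umul_tsum (@tsumE _ _ [:: k]) ?big_seq1 ?subrr ?ucoef_uconst //.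
split => // p /mulmx_neq0 [_]; rewrite ucoef_uconst.
case: ifP => [/eqP h _|]; last by rewrite eqxx.
by rewrite inE; apply/eqP; lia.
Qed.

Lemma umul_const_l (s : useries) (A : M) k : ucoef (umul (uconst A) s) k = A *m ucoef s k.
Proof.
rewrite umul_tsum (@tsumE _ _ [:: 0]) ?big_seq1 ?subr0 ?ucoef_uconst //.
split => // p /mulmx_neq0 [+ _]; rewrite ucoef_uconst.
case: ifP => [/eqP h _|]; last by rewrite eqxx.
by rewrite inE; apply/eqP.
Qed.

Lemma tsum_mulr (F : int -> M) (A : M) : finsupp F ->
  tsum F *m A = tsum (fun p => F p *m A).
Proof.
move=> [S [uS cS]]; rewrite (tsumE (conj uS cS)) (@tsumE _ _ S).
  by rewrite mulmx_suml.
split => // p h; apply: cS; apply: contraNneq h => ->; by rewrite mul0mx.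
Qed.

Lemma tsum_mull (F : int -> M) (A : M) : finsupp F ->
  A *m tsum F = tsum (fun p => A *m F p).
Proof.
move=> [S [uS cS]]; rewrite (tsumE (conj uS cS)) (@tsumE _ _ S).
  by rewrite mulmx_sumr.
split => // p h; apply: cS; apply: contraNneq h => ->; by rewrite mulmx0.
Qed.

Lemma ueqs_trans (s t u : useries) : ueqs s t -> ueqs t u -> ueqs s u.
Proof. by move=> h1 h2 k; rewrite h1 h2. Qed.
Lemma ueqs_sym (s t : useries) : ueqs s t -> ueqs t s.
Proof. by move=> h k; rewrite h. Qed.

End Ser.
Section Ser.
Variables (R : comNzRingType) (n : nat).
Local Notation M := 'M[R]_n.
Local Notation useries := (useries R n).
Local Notation lseries := (lseries R n).
Lemma fin_mull (F : int -> M) (A : M) : finsupp F -> finsupp (fun p => A *m F p).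
Proof.
move=> [S [uS cS]]; exists S; split => // p h; apply: cS.
by apply: contraNneq h => ->; rewrite mulmx0.
Qed.
Lemma fin_mulr (F : int -> M) (A : M) : finsupp F -> finsupp (fun p => F p *m A).
Proof.
move=> [S [uS cS]]; exists S; split => // p h; apply: cS.
by apply: contraNneq h => ->; rewrite mul0mx.
Qed.

Lemma umul_assoc (s t u : useries) : ueqs (umul (umul s t) u) (umul s (umul t u)).
Proof.
move=> k; rewrite umul_tsum.
rewrite (tsum_ext (fun p => congr1 (fun x => x *m ucoef u (k - p)) (umul_tsum s t p))).
rewrite (tsum_ext (fun p => (tsum_mulr (ucoef u (k - p)) (fin_umul s t p)))).
rewrite umul_tsum.
have e : forall q, ucoef s q *m ucoef (umul t u) (k - q) =
   tsum (fun p => ucoef s q *m ucoef t (p - q) *m ucoef u (k - p)).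
  move=> q; rewrite umul_tsum (tsum_mull _ (fin_umul _ _ _)).
  rewrite [LHS](tsum_shift (- q)); last exact/fin_mull/fin_umul.
  apply: tsum_ext => p; rewrite mulmxA.
  by rewrite opprB addrA subrK.
rewrite (tsum_ext e).
rewrite (@tsum_exchange _ (fun p q => ucoef s q *m ucoef t (p - q) *m ucoef u (k - p))
   (itvd (uN s + uN t) (absz (uN s + uN t - (k - uN u))%R).+1)
   (itvd (uN s) (absz (uN s - (k - uN u - uN t))%R).+1)) ?itvd_uniq //.
move=> p q /mulmx_neq0 [/mulmx_neq0 [/ucoef_le h1 /ucoef_le h2] /ucoef_le h3].
rewrite !mem_itvd; apply/andP; split; lia.
Qed.

Lemma ueqs_refl (s : useries) : ueqs s s. Proof. by []. Qed.

Lemma umul_congr (s s' t t' : useries) : ueqs s s' -> ueqs t t' -> ueqs (umul s t) (umul s' t').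
Proof. by move=> h1 h2 k; rewrite !umul_tsum; apply: tsum_ext => p; rewrite h1 h2. Qed.

Lemma umul1 (s : useries) : ueqs (umul s (uone R n)) s.
Proof. by move=> k; rewrite umul_const_r mulmx1. Qed.
Lemma mul1u (s : useries) : ueqs (umul (uone R n) s) s.
Proof. by move=> k; rewrite umul_const_l mul1mx. Qed.

Lemma conj_key (P Pinv x y : useries) : ueqs (umul Pinv P) (uone R n) ->
  ueqs (umul (umul (umul P x) Pinv) (umul (umul P y) Pinv)) (umul (umul P (umul x y)) Pinv).
Proof.
move=> hP.
apply: ueqs_trans (umul_assoc _ _ _) _.
have h1 : ueqs (umul Pinv (umul (umul P y) Pinv)) (umul y Pinv).
  apply: ueqs_trans (ueqs_sym (umul_assoc _ _ _)) _.
  apply: umul_congr (ueqs_refl _).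
  apply: ueqs_trans (ueqs_sym (umul_assoc _ _ _)) _.
  exact: ueqs_trans (umul_congr hP (ueqs_refl _)) (mul1u _).
apply: ueqs_trans (umul_congr (ueqs_refl _) h1) _.
apply: ueqs_trans (umul_assoc _ _ _) _.
apply: ueqs_trans (umul_congr (ueqs_refl _) (ueqs_sym (umul_assoc _ _ _))) _.
exact: ueqs_sym (umul_assoc _ _ _).
Qed.

Lemma conj_comm (P Pinv a b : useries) : ueqs (umul Pinv P) (uone R n) ->
  ueqs (umul a b) (umul b a) ->
  ueqs (umul (umul (umul P a) Pinv) (umul (umul P b) Pinv))
       (umul (umul (umul P b) Pinv) (umul (umul P a) Pinv)).
Proof.
move=> hP hab.
apply: ueqs_trans (conj_key _ _ hP) _.
apply: ueqs_trans (umul_congr (umul_congr (ueqs_refl _) hab) (ueqs_refl _)) _.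
exact: ueqs_sym (conj_key _ _ hP).
Qed.

Lemma const_comm (A B : M) : A *m B = B *m A ->
  ueqs (umul (uconst A) (uconst B)) (umul (uconst B) (uconst A)).
Proof.
move=> hAB k; rewrite !umul_const_l !ucoef_uconst.
by case: ifP; rewrite ?mulmx0.
Qed.

Lemma umul_up (s t : useries) (a b k : int) :
  (forall p, a < p -> ucoef s p = 0) -> (forall p, b < p -> ucoef t p = 0) ->
  a + b < k -> ucoef (umul s t) k = 0.
Proof.
move=> hs ht hk; rewrite umul_tsum; apply: tsum0 => p.
case: (lerP p a) => hp; last by rewrite hs // mul0mx.
by rewrite ht ?mulmx0 //; lia.
Qed.

Definition flip (s : lseries) : useries := USer (- lN s) (lc s).

Lemma lcoef_flip (s : lseries) k : lcoef s k = ucoef (flip s) (- k).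
Proof.
rewrite /lcoef /ucoef /= lerN2; case: ifP => // _; congr (lc s _); lia.
Qed.

Lemma flip_lmul (s t : lseries) : ueqs (flip (lmul s t)) (umul (flip s) (flip t)).
Proof. by move=> k; rewrite /ucoef /= opprD. Qed.

Lemma flip_lbr (s t : lseries) : ueqs (flip (lbr s t)) (ubr (flip s) (flip t)).
Proof. by move=> k; rewrite /ucoef /= opprD. Qed.

Lemma lcoef_ge (s : lseries) k : lcoef s k != 0 -> lN s <= k.
Proof. by rewrite /lcoef; case: ifP => //; rewrite eqxx. Qed.

Lemma fin_lmul (s t : lseries) k : finsupp (fun p => lcoef s p *m lcoef t (k - p)).
Proof.
apply: (@finsupp_bounds _ _ (lN s) (k - lN t)) => p /mulmx_neq0 [/lcoef_ge h1 /lcoef_ge h2].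
lia.
Qed.

Lemma lmul_tsum (s t : lseries) k :
  lcoef (lmul s t) k = tsum (fun p => lcoef s p *m lcoef t (k - p)).
Proof.
rewrite lcoef_flip flip_lmul umul_tsum (tsum_opp (fin_umul _ _ _)).
apply: tsum_ext => p; rewrite !lcoef_flip; congr (_ *m ucoef _ _).
by rewrite opprB opprK addrC.
Qed.

Lemma lbrE (s t : lseries) k :
  lcoef (lbr s t) k = lcoef (lmul s t) k - lcoef (lmul t s) k.
Proof.
rewrite !lcoef_flip flip_lbr ubrE -!flip_lmul //.
Qed.

Lemma flip_one : ueqs (flip (lone R n)) (uone R n).
Proof. by move=> k; rewrite /ucoef /= oppr0. Qed.

Lemma flipZ (A : M) k : ucoef (flip (lzinv A)) k = if k == 1 then A else 0.
Proof.
rewrite /ucoef /= opprK; case: (ltgtP k 1) => hk.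
- by rewrite ifF //; apply/negbTE; lia.
- by [].
- by rewrite hk.
Qed.

Lemma Z_comm (A B : M) : A *m B = B *m A ->
  ueqs (umul (flip (lzinv A)) (flip (lzinv B))) (umul (flip (lzinv B)) (flip (lzinv A))).
Proof.
move=> hAB k; rewrite !umul_tsum; apply: tsum_ext => p; rewrite !flipZ.
case: ifP => _; last by rewrite !mul0mx.
by case: ifP; rewrite ?mulmx0.
Qed.

Lemma lmul_low (s t : lseries) (a b k : int) :
  (forall p, p < a -> lcoef s p = 0) -> (forall p, p < b -> lcoef t p = 0) ->
  k < a + b -> lcoef (lmul s t) k = 0.
Proof.
move=> hs ht hk; rewrite lmul_tsum; apply: tsum0 => p.
case: (lerP a p) => hp; last by rewrite hs // mul0mx.
by rewrite ht ?mulmx0 //; lia.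
Qed.

End Ser.
Section Coef.
Variables (R : comNzRingType) (n : nat).
Local Notation M := 'M[R]_n.
Local Notation useries := (useries R n).
Local Notation lseries := (lseries R n).

Lemma ucoef_shift (s : useries) m k : ucoef (ushift s m) k = ucoef s (k - m).
Proof.
rewrite /ucoef /=; have -> : (k - m <= uN s) = (k <= uN s + m) by apply/idP/idP; lia.
by case: ifP => // _; congr (uc s _); lia.
Qed.

Lemma lcoef_shift (s : lseries) m k : lcoef (Defs.lshift s m) k = lcoef s (k - m).
Proof.
rewrite /lcoef /=; have -> : (lN s <= k - m) = (lN s + m <= k) by apply/idP/idP; lia.
by case: ifP => // _; congr (lc s _); lia.
Qed.

Lemma upos_coef (s : useries) k : ucoef (upos s) k = if 0 <= k then ucoef s k else 0.
Proof.
rewrite /ucoef /=; case: (lerP 0 k) => hk.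
  by case: ifP => // h; rewrite ifT //; lia.
by case: ifP => // h; rewrite ifF //; apply/negbTE; lia.
Qed.

Lemma upos_l_coef (s : useries) k : lcoef (upos_l s) k = if 0 <= k then ucoef s k else 0.
Proof.
rewrite /lcoef /= subr0; case: ifP => // h; congr (ucoef s _); lia.
Qed.

Lemma lneg_coef (s : lseries) k : lcoef (lneg s) k = if k < 0 then lcoef s k else 0.
Proof.
rewrite /lcoef /=; case: (ltrP k 0) => hk.
  by case: ifP => // h; rewrite ifT //; lia.
by case: ifP => // h; rewrite ifF //; apply/negbTE; lia.
Qed.

Lemma lneg_u_coef (s : lseries) k : ucoef (lneg_u s) k = if k < 0 then lcoef s k else 0.
Proof.
rewrite /ucoef /=; case: (ltrP k 0) => hk.
  by rewrite ifT; [congr (lcoef s _); lia | lia].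
by rewrite ifF //; apply/negbTE; lia.
Qed.

Variable r : nat.

Lemma Bser_coef (U : 'I_r -> useries) m a k :
  ucoef (Bser U m a) k = if 0 <= k then ucoef (U a) (k - m) else 0.
Proof. by rewrite /Bser upos_coef ucoef_shift. Qed.

Lemma Bser_l_coef (U : 'I_r -> useries) m a k :
  lcoef (Bser_l U m a) k = if 0 <= k then ucoef (U a) (k - m) else 0.
Proof. by rewrite /Bser_l upos_l_coef ucoef_shift. Qed.

Lemma Cser_coef (W : 'I_r -> lseries) m b k :
  lcoef (Cser W m b) k = if k < 0 then lcoef (W b) (k - (m + 1)) else 0.
Proof. by rewrite /Cser lneg_coef lcoef_shift. Qed.

Lemma Cser_u_coef (W : 'I_r -> lseries) m b k :
  ucoef (Cser_u W m b) k = if k < 0 then lcoef (W b) (k - (m + 1)) else 0.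
Proof. by rewrite /Cser_u lneg_u_coef lcoef_shift. Qed.

Lemma uder_coef (d : R -> R) (s : useries) k : d 0 = 0 ->
  ucoef (uder d s) k = map_mx d (ucoef s k).
Proof.
move=> d0; rewrite /ucoef /=; case: ifP => // _.
by apply/matrixP => i j; rewrite !mxE d0.
Qed.

Lemma lder_coef (d : R -> R) (s : lseries) k : d 0 = 0 ->
  lcoef (lder d s) k = map_mx d (lcoef s k).
Proof.
move=> d0; rewrite /lcoef /=; case: ifP => // _.
by apply/matrixP => i j; rewrite !mxE d0.
Qed.

Lemma map_mx0d (d : R -> R) : d 0 = 0 -> map_mx d (0 : M) = 0.
Proof. by move=> d0; apply/matrixP => i j; rewrite !mxE d0. Qed.

Lemma ginv_supp (g ginv : useries) : in_Gneg g -> ueqs (umul ginv g) (uone R n) ->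
  forall k, 0 < k -> ucoef ginv k = 0.
Proof.
move=> [hg0 hg1] hi.
suff H : forall i : nat, forall k, 0 < k -> uN ginv - i%:Z < k -> ucoef ginv k = 0.
  by move=> k hk; apply: (H (absz (uN ginv - k)%R).+1) => //; lia.
elim=> [|i IH] k hk hik; first by apply: ucoef_gt; lia.
have := hi k; rewrite ucoef_uconst ifF; last by apply/negbTE; lia.
rewrite umul_tsum (@tsumE _ _ [:: k]).
  by rewrite big_seq1 subrr hg1 mulmx1.
split => // p /mulmx_neq0 [h1 h2]; rewrite inE.
case: (ltgtP p k) => hp //.
  by move: h2; rewrite hg0 ?eqxx //; lia.
by move: h1; rewrite IH ?eqxx //; lia.
Qed.

Lemma ginv_0 (g ginv : useries) : in_Gneg g -> ueqs (umul ginv g) (uone R n) ->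
  ucoef ginv 0 = 1%:M.
Proof.
move=> hg hi; have hs := ginv_supp hg hi; case: hg => [hg0 hg1].
have := hi 0; rewrite ucoef_uconst eqxx.
rewrite umul_tsum (@tsumE _ _ [:: 0]).
  by rewrite big_seq1 subrr hg1 mulmx1.
split => // p /mulmx_neq0 [h1 h2]; rewrite inE.
case: (ltgtP p 0) => hp //.
  by move: h2; rewrite hg0 ?eqxx //; lia.
by move: h1; rewrite hs ?eqxx //; lia.
Qed.

Lemma conj_supp (g ginv : useries) (A : M) : in_Gneg g -> ueqs (umul ginv g) (uone R n) ->
  (forall k, 0 < k -> ucoef (umul (umul g (uconst A)) ginv) k = 0) /\
  ucoef (umul (umul g (uconst A)) ginv) 0 = A.
Proof.
move=> hg hi; have hs := ginv_supp hg hi; have h0 := ginv_0 hg hi.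
case: hg => [hg0 hg1]; split.
  move=> k hk; apply: (@umul_up _ _ _ _ 0 0); [|exact: hs|by rewrite addr0].
  by move=> p hp; rewrite umul_const_r hg0 ?mul0mx.
rewrite umul_tsum (@tsumE _ _ [:: 0]).
  by rewrite big_seq1 subrr umul_const_r hg1 h0 mul1mx mulmx1.
split => // p /mulmx_neq0 [h1 h2]; rewrite inE.
case: (ltgtP p 0) => hp //.
  by move: h2; rewrite hs ?eqxx //; lia.
by move: h1; rewrite umul_const_r hg0 ?mul0mx ?eqxx.
Qed.

Lemma Xinv_supp (X Xinv : lseries) : in_Gpos X -> leqs (lmul Xinv X) (lone R n) ->
  forall k, k < 0 -> lcoef Xinv k = 0.
Proof.
move=> [hX0 [Y [hY1 hY2]]] hi.
suff H : forall i : nat, forall k, k < 0 -> k < lN Xinv + i%:Z -> lcoef Xinv k = 0.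
  by move=> k hk; apply: (H (absz (k - lN Xinv)%R).+1) => //; lia.
elim=> [|i IH] k hk hik.
  by rewrite /lcoef ifF //; apply/negbTE; lia.
have e : lcoef (lone R n) k = 0.
  by rewrite lcoef_flip flip_one ucoef_uconst ifF //; apply/negbTE; lia.
have := hi k; rewrite e.
rewrite lmul_tsum (@tsumE _ _ [:: k]).
  rewrite big_seq1 subrr => /(congr1 (mulmx ^~ Y)).
  by rewrite -mulmxA hY1 mulmx1 mul0mx.
split => // p /mulmx_neq0 [h1 h2]; rewrite inE.
case: (ltgtP p k) => hp //.
  by move: h1; rewrite IH ?eqxx //; lia.
by move: h2; rewrite hX0 ?eqxx //; lia.
Qed.

End Coef.

Unset Implicit Arguments.

Theorem proposition3p2
  (C : numClosedFieldType) (R : comAlgType C) (n r : nat)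
  (E : 'I_r -> 'M[C]_n) (hE : max_comm_basis E)
  (D : int -> 'I_r -> R -> R)
  (hDder : forall m a, is_Cderivation (D m a))
  (hDcomm : forall m1 a1 m2 a2 (x : R), D m1 a1 (D m2 a2 x) = D m2 a2 (D m1 a1 x))
  (g ginv : useries R n) (hg : in_Gneg g)
  (hginv1 : ueqs (umul g ginv) (uone R n)) (hginv2 : ueqs (umul ginv g) (uone R n))
  (X Xinv : lseries R n) (hX : in_Gpos X)
  (hXinv1 : leqs (lmul X Xinv) (lone R n)) (hXinv2 : leqs (lmul Xinv X) (lone R n)) :
  let U := Ufam E g ginv in
  let W := Wfam E X Xinv in
  (forall (m1 : int) (m2 : nat) (b1 a2 : 'I_r), m1 < 0 -> forall k : int,
     ucoef (uder (D m1 b1) (Bser U m2%:Z a2)) k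
     - ucoef (uder (D m2%:Z a2) (Cser_u W m1 b1)) k
     - ucoef (ubr (Cser_u W m1 b1) (Bser U m2%:Z a2)) k = 0) ->
  (forall (m1 m2 : nat) (a1 a2 : 'I_r) (k : int),
     ucoef (uder (D m1%:Z a1) (Bser U m2%:Z a2)) k
     - ucoef (uder (D m2%:Z a2) (Bser U m1%:Z a1)) k
     - ucoef (ubr (Bser U m1%:Z a1) (Bser U m2%:Z a2)) k = 0) ->
  (forall (m1 m2 : int) (b1 b2 : 'I_r), m1 < 0 -> m2 < 0 -> forall k : int,
     ucoef (uder (D m1 b1) (Cser_u W m2 b2)) k
     - ucoef (uder (D m2 b2) (Cser_u W m1 b1)) k
     - ucoef (ubr (Cser_u W m1 b1) (Cser_u W m2 b2)) k = 0) ->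
  combined_solution D U W.
Proof.
move=> U W HCB HBB HCC.
have D0 : forall m a, D m a 0 = 0.
  move=> m a; case: (hDder m a) => hadd _ _.
  by apply: (addrI (D m a 0)); rewrite addr0 -hadd addr0.
have D1 : forall m a, D m a 1 = 0.
  move=> m a; case: (hDder m a) => _ _ hmul.
  have h := hmul 1 1; rewrite !mulr1 mul1r in h.
  by apply: (addrI (D m a 1)); rewrite addr0 -h.
have Dc : forall m a (c : C), D m a (c%:A) = 0.
  by move=> m a c; case: (hDder m a) => _ hsc _; rewrite hsc D1 scaler0.
have Demb : forall m a b, map_mx (D m a) (emb R (E b)) = 0.
  by move=> m a b; apply/matrixP => i j; rewrite !mxE Dc.
have Dz : forall m a, map_mx (D m a) (0 : 'M[R]_n) = 0.
  by move=> m a; apply: map_mx0d.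
have uderE : forall m a (s : useries R n) k, ucoef (uder (D m a) s) k = map_mx (D m a) (ucoef s k).
  by move=> m a s k; apply: uder_coef.
have lderE : forall m a (s : lseries R n) k, lcoef (lder (D m a) s) k = map_mx (D m a) (lcoef s k).
  by move=> m a s k; apply: lder_coef.
have Ecomm : forall a b, emb R (E a) *m emb R (E b) = emb R (E b) *m emb R (E a).
  move=> a b; rewrite /emb -!(map_mxM (GRing.in_alg R)).
  by case: hE => [[_ hc _] _]; rewrite hc.
have US : forall a k, 0 < k -> ucoef (U a) k = 0.
  by move=> a; case: (conj_supp (emb R (E a)) hg hginv2).
have U0 : forall a, ucoef (U a) 0 = emb R (E a).
  by move=> a; case: (conj_supp (emb R (E a)) hg hginv2).
have XiS := Xinv_supp hX hXinv2.
have WS : forall b k, k < -1 -> lcoef (W b) k = 0.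
  move=> b k hk; apply: (@lmul_low _ _ _ _ (-1) 0); last by rewrite addr0.
    move=> p hp; apply: (@lmul_low _ _ _ _ 0 (-1)); last by rewrite add0r.
      by case: hX => hX0 _; apply: hX0.
    move=> q hq; rewrite lcoef_flip flipZ ifF //; apply/negbTE; lia.
  exact: XiS.
have UC : forall a b k, ucoef (umul (U a) (U b)) k = ucoef (umul (U b) (U a)) k.
  by move=> a b; apply: conj_comm hginv2 (const_comm (Ecomm a b)).
have WC : forall a b k, lcoef (lmul (W a) (W b)) k = lcoef (lmul (W b) (W a)) k.
  move=> a b k; rewrite !lcoef_flip.
  have fW : forall c, ueqs (flip (W c)) (umul (umul (flip X) (flip (lzinv (emb R (E c))))) (flip Xinv)).
    move=> c; apply: ueqs_trans (flip_lmul _ _) _.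
    exact: umul_congr (flip_lmul _ _) (ueqs_refl _).
  have hP : ueqs (umul (flip Xinv) (flip X)) (uone R n).
    move=> j; rewrite -flip_lmul -(opprK j) -lcoef_flip hXinv2 lcoef_flip flip_one.
    by [].
  rewrite !flip_lmul !(umul_congr (fW _) (fW _)).
  exact: conj_comm hP (Z_comm (Ecomm a b)) _.
split.
-
  move=> m a1 a2 k; rewrite uderE ubrE (umul_tsum (Bser U m a1)) (umul_tsum (U a2)).
  case: (lerP 0 k) => hk.
    have -> : map_mx (D m a1) (ucoef (U a2) k) = 0.
      have [hk'|->] : 0 < k \/ k = 0 by lia.
        by rewrite US // Dz.
      by rewrite U0 Demb.
    have e1 : tsum (fun p => ucoef (Bser U m a1) p *m ucoef (U a2) (k - p)) =
              ucoef (umul (U a1) (U a2)) (k - m%:Z).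
      rewrite (umul_tsum (U a1)) (tsum_shift (- m%:Z) (fin_umul (U a1) (U a2) (k - m%:Z))); apply: tsum_ext => p.
      rewrite Bser_coef; case: (lerP 0 p) => hp.
        by congr (_ *m _); congr (ucoef _ _); lia.
      by rewrite mul0mx (US a2) ?mulmx0 //; lia.
    have e2 : tsum (fun p => ucoef (U a2) p *m ucoef (Bser U m a1) (k - p)) =
              ucoef (umul (U a2) (U a1)) (k - m%:Z).
      rewrite (umul_tsum (U a2)); apply: tsum_ext => p.
      rewrite Bser_coef; case: (lerP 0 (k - p)) => hp.
        by congr (_ *m _); congr (ucoef _ _); lia.
      by rewrite mulmx0 (US a2) ?mul0mx //; lia.
    by rewrite e1 e2 UC subrr.
  have H := HBB m (m + absz k)%N a1 a2 m.
  have T1 : ucoef (Bser U (m + absz k)%N a2) m = ucoef (U a2) k.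
    rewrite Bser_coef (_ : (0 <= m%:Z) = true) //.
    by congr (ucoef _ _); lia.
  have T2 : ucoef (Bser U m a1) m = emb R (E a1).
    by rewrite Bser_coef (_ : (0 <= m%:Z) = true) // subrr U0.
  rewrite !uderE T1 T2 Demb subr0 in H.
  rewrite (subr0_eq H) !ubrE (umul_tsum (Bser U m a1) (Bser U _ a2))
    (umul_tsum (Bser U _ a2) (Bser U m a1)).
  congr (_ - _).
    apply: tsum_ext => p; rewrite !Bser_coef.
    case: (lerP 0 (m%:Z - p)) => h1.
      by congr (_ *m ucoef _ _); lia.
    rewrite mulmx0; case: (lerP 0 p) => h2; last by rewrite mul0mx.
    by rewrite US ?mul0mx //; lia.
  rewrite [RHS](tsum_shift (- (m + absz k)%N%:Z) (fin_umul _ _ _)).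
  apply: tsum_ext => p; rewrite !Bser_coef.
  case: (lerP 0 p) => h1.
    have -> : (0 <= k - (p + - (m + absz k)%N%:Z)) = (0 <= m%:Z - p) by apply/idP/idP; lia.
    case: ifP => _; last by rewrite !mulmx0.
    by congr (_ *m ucoef _ _); lia.
  rewrite mul0mx; case: ifP => h2; last by rewrite mulmx0.
  by rewrite (US a1) ?mulmx0 //; lia.
-
  move=> m a1 b k; rewrite lderE lbrE (lmul_tsum (Bser_l U m a1) (W b))
    (lmul_tsum (W b) (Bser_l U m a1)).
  case: (ltrP k (-1)) => hk.
    rewrite (WS b k hk) Dz.
    rewrite tsum0; last first.
      move=> p; rewrite Bser_l_coef; case: (lerP 0 p) => hp; last by rewrite mul0mx.
      by rewrite (WS b) ?mulmx0 //; lia.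
    rewrite tsum0 ?subr0 //.
    move=> p; rewrite Bser_l_coef; case: (lerP 0 (k - p)) => hp; last by rewrite mulmx0.
    by rewrite (WS b) ?mul0mx //; lia.
  have H := HCB (- k - 2) m b a1 (ltac:(lia)) (-1).
  have T1 : ucoef (uder (D (- k - 2) b) (Bser U m a1)) (-1) = 0.
    by rewrite uderE Bser_coef (_ : (0 <= -1 :> int) = false) // Dz.
  have T2 : ucoef (uder (D m a1) (Cser_u W (- k - 2) b)) (-1) = map_mx (D m a1) (lcoef (W b) k).
    rewrite uderE Cser_u_coef (_ : (-1 < 0 :> int) = true) //.
    by congr (map_mx _ (lcoef _ _)); lia.
  move/eqP: H; rewrite T1 T2 sub0r -opprD oppr_eq0 addr_eq0 => /eqP ->.
  rewrite ubrE (umul_tsum (Cser_u W (- k - 2) b) (Bser U m a1))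
    (umul_tsum (Bser U m a1) (Cser_u W (- k - 2) b)) opprB.
  congr (_ - _).
    apply: tsum_ext => p; rewrite Bser_coef Bser_l_coef Cser_u_coef.
    case: (lerP 0 p) => hp; last by rewrite !mul0mx.
    rewrite (_ : (-1 - p < 0) = true); last by apply/idP; lia.
    by congr (_ *m lcoef _ _); lia.
  rewrite [LHS](tsum_shift (- k - 1) (fin_umul _ _ _)); apply: tsum_ext => q.
  rewrite Cser_u_coef Bser_coef Bser_l_coef.
  case: (lerP 0 (k - q)) => hq.
    rewrite (_ : (q + (- k - 1) < 0) = true); last by apply/idP; lia.
    rewrite (_ : (0 <= -1 - (q + (- k - 1))) = true); last by apply/idP; lia.
    by congr (lcoef _ _ *m ucoef _ _); lia.
  rewrite (_ : (0 <= -1 - (q + (- k - 1))) = false); last by apply/negbTE; lia.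
  by rewrite !mulmx0.
-
  move=> m hm b1 b2 k; rewrite lderE lbrE (lmul_tsum (Cser W m b1) (W b2))
    (lmul_tsum (W b2) (Cser W m b1)).
  case: (ltrP k (-1)) => hk.
    rewrite (WS b2 k hk) Dz.
    have e1 : tsum (fun p => lcoef (Cser W m b1) p *m lcoef (W b2) (k - p)) =
              lcoef (lmul (W b1) (W b2)) (k - (m + 1)).
      rewrite (lmul_tsum (W b1) (W b2)) (tsum_shift (- (m + 1)) (fin_lmul (W b1) (W b2) (k - (m + 1)))).
      apply: tsum_ext => p; rewrite Cser_coef; case: (ltrP p 0) => hp.
        by congr (_ *m lcoef _ _); lia.
      by rewrite mul0mx (WS b2) ?mulmx0 //; lia.
    have e2 : tsum (fun p => lcoef (W b2) p *m lcoef (Cser W m b1) (k - p)) =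
              lcoef (lmul (W b2) (W b1)) (k - (m + 1)).
      rewrite (lmul_tsum (W b2) (W b1)); apply: tsum_ext => p.
      rewrite Cser_coef; case: (ltrP (k - p) 0) => hp.
        by congr (_ *m lcoef _ _); lia.
      by rewrite mulmx0 (WS b2) ?mul0mx //; lia.
    by rewrite e1 e2 WC subrr.
  have H := HCC m (m - k - 2) b1 b2 hm (ltac:(lia)) (m - 1).
  have T1 : ucoef (uder (D m b1) (Cser_u W (m - k - 2) b2)) (m - 1) =
            map_mx (D m b1) (lcoef (W b2) k).
    rewrite uderE Cser_u_coef (_ : (m - 1 < 0) = true); last by apply/idP; lia.
    by congr (map_mx _ (lcoef _ _)); lia.
  have T2 : ucoef (uder (D (m - k - 2) b2) (Cser_u W m b1)) (m - 1) = 0.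
    rewrite uderE Cser_u_coef (_ : (m - 1 < 0) = true); last by apply/idP; lia.
    by rewrite (WS b1) ?Dz //; lia.
  rewrite T1 T2 subr0 in H; rewrite (subr0_eq H).
  rewrite ubrE (umul_tsum (Cser_u W m b1) (Cser_u W (m - k - 2) b2))
    (umul_tsum (Cser_u W (m - k - 2) b2) (Cser_u W m b1)).
  congr (_ - _).
    apply: tsum_ext => p; rewrite !Cser_u_coef Cser_coef.
    case: (ltrP (m - 1 - p) 0) => h1.
      by congr (_ *m lcoef _ _); lia.
    rewrite mulmx0; case: (ltrP p 0) => h2; last by rewrite mul0mx.
    by rewrite (WS b1) ?mul0mx //; lia.
  rewrite [LHS](tsum_shift (m - k - 1) (fin_umul _ _ _)); apply: tsum_ext => q.
  rewrite !Cser_u_coef Cser_coef.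
  case: (ltrP (k - q) 0) => h1.
    rewrite (_ : (m - 1 - (q + (m - k - 1)) < 0) = true); last by apply/idP; lia.
    case: (ltrP (q + (m - k - 1)) 0) => h2.
      by congr (lcoef _ _ *m lcoef _ _); lia.
    by rewrite mul0mx (WS b1) ?mulmx0 //; lia.
  rewrite (_ : (m - 1 - (q + (m - k - 1)) < 0) = false); last by apply/negbTE; lia.
  by rewrite !mulmx0.
-
  move=> m hm b1 a k; rewrite uderE ubrE (umul_tsum (Cser_u W m b1) (U a))
    (umul_tsum (U a) (Cser_u W m b1)).
  case: (lerP 0 k) => hk.
    have -> : map_mx (D m b1) (ucoef (U a) k) = 0.
      have [hk'|->] : 0 < k \/ k = 0 by lia.
        by rewrite US // Dz.
      by rewrite U0 Demb.
    rewrite tsum0; last first.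
      move=> p; rewrite Cser_u_coef; case: (ltrP p 0) => hp; last by rewrite mul0mx.
      by rewrite (US a) ?mulmx0 //; lia.
    rewrite tsum0 ?subr0 //.
    move=> p; rewrite Cser_u_coef; case: (ltrP (k - p) 0) => hp; last by rewrite mulmx0.
    by rewrite (US a) ?mul0mx //; lia.
  have H := HCB m (absz k) b1 a hm 0.
  have T1 : ucoef (uder (D m b1) (Bser U (absz k) a)) 0 = map_mx (D m b1) (ucoef (U a) k).
    rewrite uderE Bser_coef (_ : (0 <= 0 :> int) = true) //.
    by congr (map_mx _ (ucoef _ _)); lia.
  have T2 : ucoef (uder (D (absz k) a) (Cser_u W m b1)) 0 = 0.
    by rewrite uderE Cser_u_coef (_ : ((0 : int) < 0) = false) // Dz.
  rewrite T1 T2 subr0 in H; rewrite (subr0_eq H).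
  rewrite ubrE (umul_tsum (Cser_u W m b1) (Bser U (absz k) a))
    (umul_tsum (Bser U (absz k) a) (Cser_u W m b1)).
  congr (_ - _).
    apply: tsum_ext => p; rewrite Bser_coef; case: (lerP 0 (0 - p)) => h.
      by congr (_ *m ucoef _ _); lia.
    rewrite Cser_u_coef (_ : (p < 0) = false); last by apply/negbTE; lia.
    by rewrite !mul0mx.
  rewrite [LHS](tsum_shift (absz k)%:Z (fin_umul _ _ _)); apply: tsum_ext => q.
  rewrite Bser_coef; case: (lerP 0 (q + (absz k)%:Z)) => h.
    by congr (ucoef _ _ *m ucoef _ _); lia.
  rewrite mul0mx Cser_u_coef (_ : (k - q < 0) = false) ?mulmx0 //.
  by apply/negbTE; lia.
Qed.
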